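(* Let $H$ be an additive subgroup of $\mathbb{R}^{n}$ with complex dimension $\widetilde{\mathrm{dim}}(H)=p+ir$. If $p+r<n$, then for every $u\in\mathbb{R}^{n}$ the group $H+\mathbb{Z}u$ is not dense in $\mathbb{R}^{n}$.
   Context: For an additive subgroup $G$ of $\mathbb{R}^n$, $\widetilde{\mathrm{dim}}(G):=p+i(q-p)$ where $p=\max\{\dim V: V\text{ a vector subspace of }\mathbb{R}^n,\ V\subset G\}$ and $q=\dim\mathrm{vect}(G)$, $\mathrm{vect}(G)$ being the real span of $G$. *)

(* Defs.v *)
(* R^n is 'rV[R]_n with R : realType,
   equipped with the product (matrix) topology from MathComp-Analysis. *)
From HB Require Import structures.
From mathcomp Require Import all_boot all_order all_algebra.
From mathcomp Require Import all_classical all_reals all_analysis.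
Set Implicit Arguments. Unset Strict Implicit. Unset Printing Implicit Defensive.
Import Order.TTheory GRing.Theory Num.Theory.
Import numFieldNormedType.Exports.
Local Open Scope classical_set_scope.
Local Open Scope ring_scope.

Section Defs.
Variables (R : realType) (n : nat).

Definition is_add_subgroup (H : set 'rV[R]_n) : Prop :=
  H 0 /\ forall x y, H x -> H y -> H (x - y).

(* A vector subspace of R^n is represented by (the row space of) a matrix V;
   its dimension is \rank V. *)
Definition subspace_in (H : set 'rV[R]_n) (V : 'M[R]_n) : Prop :=
  forall v : 'rV[R]_n, (v <= V)%MS -> H v.

Definition max_subspace_dim (H : set 'rV[R]_n) (p : nat) : Prop :=
  (exists V : 'M[R]_n, subspace_in H V /\ \rank V = p) /\
  (forall V : 'M[R]_n, subspace_in H V -> (\rank V <= p)%N).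

Definition span_dim (H : set 'rV[R]_n) (q : nat) : Prop :=
  (exists V : 'M[R]_n, (forall h, H h -> (h <= V)%MS) /\ \rank V = q) /\
  (forall V : 'M[R]_n, (forall h, H h -> (h <= V)%MS) -> (q <= \rank V)%N).

(* complex dimension  dim~(H) = p + i r  with r = q - p, encoded as the pair (p, r) *)
Definition cdim (H : set 'rV[R]_n) (p r : nat) : Prop :=
  max_subspace_dim H p /\ exists q, span_dim H q /\ r = (q - p)%N.

Definition add_Zline (H : set 'rV[R]_n) (u : 'rV[R]_n) : set 'rV[R]_n :=
  [set x | exists h k, H h /\ x = h + (k%:~R : R) *: u].

End Defs.

(* Main.v *)
Require Import Defs.
From mathcomp Require Import all_boot all_order all_algebra.
From mathcomp Require Import all_classical all_reals all_analysis.
From mathcomp Require Import zify ring lra.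
Import numFieldNormedType.Exports.
Import Order.TTheory GRing.Theory Num.Theory.
Local Open Scope classical_set_scope.
Local Open Scope ring_scope.

Lemma key_notdense (R : realType) (n : nat) (S : set 'rV[R]_n) (g : 'rV[R]_n -> R)
  (w : 'rV[R]_n) (c0 d : R) :
  continuous g -> (forall t : R, g (t *: w) = t) -> 0 < d ->
  (forall x, S x -> ~ (`|c0 - g x| < d)) -> ~ dense S.
Proof.
move=> gc gw d0 Sx dS.
have := dS (g @^-1` ball c0 d).
case.
- by exists (c0 *: w); rewrite /= gw; apply: ballxx.
- apply: open_comp; last exact: ball_open.
  by move=> x _; apply: gc.
- move=> x [/= Bx Sx'].
  apply: (Sx x Sx'); move: Bx; by rewrite -ball_normE.
Qed.

Theorem corollary1p7 (R : realType) (n : nat) (H : set 'rV[R]_n) (p r : nat) :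
  is_add_subgroup H -> cdim H p r -> (p + r < n)%N ->
  forall u : 'rV[R]_n, ~ dense (add_Zline H u).
Proof.
move=> _ [_ [q [[[V [HV rV]] _] rq]]] prn u.
have qn : (\rank V < n)%N by rewrite rV; lia.
set C := cokermx V.
have VC : forall h : 'rV[R]_n, (h <= V)%MS -> h *m C = 0.
  by move=> h; rewrite submxE => /eqP.
have C0 : C != 0.
  apply/eqP => C0; move: (mxrank_coker V); rewrite -/C C0 mxrank0; lia.
clearbody C.
have [i0 [j0 Cij]] : exists i0 j0, C i0 j0 != 0.
  case: (pselect (exists i0 j0, C i0 j0 != 0)) => [//|Hc]; exfalso.
  apply: (negP C0); apply/eqP/matrixP => i j; rewrite mxE.
  by apply/eqP/negPn/negP => Cn; apply: Hc; exists i, j.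
pose g (x : 'rV[R]_n) := (x *m C) 0 j0.
have gc : continuous g.
  have ge : g = fun x => \sum_i x 0 i * C i j0.
    by apply: funext => x; rewrite /g mxE.
  rewrite ge; apply: (continuous_big add_continuous) => i _.
  move=> x; apply: continuousM; first exact: coord_continuous.
  exact: cst_continuous.
pose w : 'rV[R]_n := (C i0 j0)^-1 *: delta_mx 0 i0.
have gw : forall t, g (t *: w) = t.
  move=> t; rewrite /g /w -!scalemxAl !mxE.
  rewrite (bigD1 i0) //= big1 ?addr0; last first.
    by move=> i /negPf ii0; rewrite mxE ii0 andbF mul0r.
  by rewrite mxE !eqxx /= mul1r mulVf // mulr1.
have gH : forall h, H h -> g h = 0.
  move=> h /HV /VC hC; by rewrite /g hC mxE.
have gS : forall h (k : int), H h -> g (h + k%:~R *: u) = k%:~R * g u.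
  move=> h k Hh; rewrite /g mulmxDl -scalemxAl (VC h (HV h Hh)) add0r.
  by rewrite [LHS]mxE.
have [a0|a0] := eqVneq (g u) 0.
  apply: (@key_notdense R n _ g w 1 (1/2) gc gw) => //.
  move=> x [h [k [Hh ->]]]; rewrite gS // a0 mulr0 subr0 normr1.
  apply/negP; rewrite -leNgt; lra.
apply: (@key_notdense R n _ g w (g u / 2) (`|g u| / 2) gc gw).
  by rewrite divr_gt0 // normr_gt0.
move=> x [h [k [Hh ->]]]; rewrite gS //.
have -> : g u / 2 - k%:~R * g u = g u * (1/2 - k%:~R) by ring.
rewrite normrM ltr_pM2l ?normr_gt0 //.
case: (lerP k 0) => kk.
  have : (k%:~R : R) <= 0 by rewrite -(ler_int R k 0) in kk.
  move=> kk'; apply/negP; rewrite -leNgt.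
  rewrite ger0_norm; lra.
have : (1 : R) <= k%:~R by rewrite ler1z; lia.
move=> kk'; apply/negP; rewrite -leNgt ler0_norm; lra.
Qed.
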